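(* Assume the setting and the nsCRAIG recurrence described in the context, and let $k\ge1$ be such that $Q_k,B_k,H_k,\chi_k$ and $g_k$ (hence $\beta_{k+1}$) are defined, with nsCRAIG iterates $u^{(k)},p^{(k)}$. Then $Mu^{(k)}+Ap^{(k)}=0$ and $b-A^Tu^{(k)}+Cp^{(k)}=-\chi_k\,Ng_k$ (equal to $-\chi_k\beta_{k+1}Nq_{k+1}$ when $\beta_{k+1}>0$); in particular this residual is orthogonal to $q_1,\dots,q_k$ and $\|b-A^Tu^{(k)}+Cp^{(k)}\|_{N^{-1}}=\beta_{k+1}|\chi_k|$, so $\|b-A^Tu^{(k)}+Cp^{(k)}\|_{N^{-1}}/\|b\|_{N^{-1}}=\beta_{k+1}|\chi_k|/\beta_1$.
   Context: Setting: $M\in\mathbb{R}^{m\times m}$ is nonsymmetric and positive definite ($x^TMx>0$ for all $x\ne0$); $A\in\mathbb{R}^{m\times n}$ ($n\le m$) has full column rank; $C\in\mathbb{R}^{n\times n}$ is symmetric positive semidefinite; $b\in\mathbb{R}^n$ is nonzero; $N\in\mathbb{R}^{n\times n}$ is symmetric positive definite. Write $\|x\|_G=(x^TGx)^{1/2}$ for $G$ positive definite (for nonsymmetric $M$ this is the norm of its symmetric part). The generalized saddle point system is $Mu+Ap=0$, $A^Tu-Cp=b$, with unique solution $(u_*,p_* )$; $S=A^TM^{-1}A+C$. nsCRAIG recurrence (exact arithmetic): Initialization: $\beta_1=\|b\|_{N^{-1}}$, $q_1=N^{-1}b/\beta_1$, $Q_1=[q_1]$, $r_1=q_1$, $w_1=M^{-1}Aq_1$,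 $s_1=Cr_1$, $\alpha_1=(w_1^TMw_1+r_1^Ts_1)^{1/2}$, $v_1=w_1/\alpha_1$, $t_1=s_1/\alpha_1$, $\chi_1=\beta_1/\alpha_1$. For $k=1,2,\dots$: $\hat g_k=N^{-1}(A^Tv_k+t_k)$, $h_k=Q_k^TN\hat g_k\in\mathbb{R}^k$, $g_k=\hat g_k-Q_kh_k$, $\beta_{k+1}=\|g_k\|_N$; if $\beta_{k+1}=0$ the recurrence stops; otherwise $q_{k+1}=g_k/\beta_{k+1}$, $Q_{k+1}=[Q_k,q_{k+1}]$, $w_{k+1}=M^{-1}Aq_{k+1}-\beta_{k+1}v_k$, $r_{k+1}=q_{k+1}-(\beta_{k+1}/\alpha_k)r_k$, $s_{k+1}=Cr_{k+1}$, $\alpha_{k+1}=(w_{k+1}^TMw_{k+1}+r_{k+1}^Ts_{k+1})^{1/2}$, $v_{k+1}=w_{k+1}/\alpha_{k+1}$, $t_{k+1}=s_{k+1}/\alpha_{k+1}$, $\chi_{k+1}=-(\beta_{k+1}/\alpha_{k+1})\chi_k$. Matrices: $B_k\in\mathbb{R}^{k\times k}$ upper bidiagonal with $(B_k)_{ii}=\alpha_i$, $(B_k)_{i,i+1}=\beta_{i+1}$; $H_k\in\mathbb{R}^{k\times k}$ upper Hessenberg whose $j$-th column has entries $(H_k)_{ij}=(h_j)_i$ for $i\le j$, $(H_k)_{j+1,j}=\beta_{j+1}$ (if $j<k$), and zeros otherwise. The nsCRAIG iterates at step $k$ are $y_k=-B_k^{-1}H_k^{-1}(\beta_1e_1)$,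 $p^{(k)}=Q_ky_k$, $u^{(k)}=-M^{-1}Ap^{(k)}$, with $e_1$ the first unit vector of $\mathbb{R}^k$. *)

(* Defs.v *)
From HB Require Import structures.
From mathcomp Require Import all_boot all_order all_algebra.
Set Implicit Arguments. Unset Strict Implicit. Unset Printing Implicit Defensive.
Import Order.TTheory GRing.Theory Num.Theory.
Local Open Scope ring_scope.

Definition bform (R : rcfType) (p : nat) (G : 'M[R]_p) (x y : 'cV[R]_p) : R :=
  (x^T *m G *m y) ord0 ord0.

Definition Gnorm (R : rcfType) (p : nat) (G : 'M[R]_p) (x : 'cV[R]_p) : R :=
  Num.sqrt (bform G x x).

Definition posdef (R : rcfType) (p : nat) (G : 'M[R]_p) : Prop :=
  forall x : 'cV[R]_p, x != 0 -> 0 < bform G x x.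

Definition possemidef (R : rcfType) (p : nat) (G : 'M[R]_p) : Prop :=
  forall x : 'cV[R]_p, 0 <= bform G x x.

(* Q_k = [q_1, ..., q_k]  (sequences indexed from 1) *)
Definition Qmat (R : rcfType) (n k : nat) (q : nat -> 'cV[R]_n) : 'M[R]_(n, k) :=
  \matrix_(i < n, j < k) q j.+1 i ord0.

(* B_k: upper bidiagonal, (B_k)_{ii} = alpha_i, (B_k)_{i,i+1} = beta_{i+1}
   (1-based in the paper; here 0-based row/column indices) *)
Definition Bmat (R : rcfType) (k : nat) (alpha beta : nat -> R) : 'M[R]_k :=
  \matrix_(i < k, j < k)
    (if (j == i :> nat) then alpha i.+1
     else if (j == i.+1 :> nat) then beta j.+1 else 0).

(* H_k: upper Hessenberg, (H_k)_{ij} = (h_j)_i for i <= j,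
   (H_k)_{j+1,j} = beta_{j+1}; h j i denotes (h_j)_i (1-based). *)
Definition Hmat (R : rcfType) (k : nat) (h : nat -> nat -> R) (beta : nat -> R)
  : 'M[R]_k :=
  \matrix_(i < k, j < k)
    (if (i <= j)%N then h j.+1 i.+1
     else if (i == j.+1 :> nat) then beta j.+2 else 0).

Definition e1 (R : rcfType) (k : nat) : 'cV[R]_k :=
  \col_(i < k) (if (i == 0 :> nat) then 1 else 0).

(* Main.v *)
Require Import Defs.
From HB Require Import structures.
From mathcomp Require Import all_boot all_order all_algebra.
From mathcomp Require Import ring zify.
Import Order.TTheory GRing.Theory Num.Theory.
Local Open Scope ring_scope.


Section Helpers.
Set Implicit Arguments. Unset Strict Implicit.
Variable R : rcfType.

Definition colmx (p k : nat) (f : nat -> 'cV[R]_p) : 'M[R]_(p, k) :=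
  \matrix_(i < p, j < k) f j.+1 i ord0.
Arguments colmx {p} k f.

Lemma colmxE (a p k : nat) (X : 'M[R]_(a, p)) (f : nat -> 'cV[R]_p) i j :
  (X *m colmx k f) i j = (X *m f j.+1) i ord0.
Proof. by rewrite !mxE; apply: eq_bigr => l _; rewrite mxE. Qed.

Lemma colmx_trE (a p k : nat) (X : 'M[R]_(p, a)) (f : nat -> 'cV[R]_p) i j :
  ((colmx k f)^T *m X) i j = ((f i.+1)^T *m X) ord0 j.
Proof. by rewrite !mxE; apply: eq_bigr => l _; rewrite !mxE. Qed.

Lemma sum_ord_eq (p : nat) (F : 'I_p -> R) (a : 'I_p) (P : pred 'I_p) :
  (forall l, P l = (l == a)) -> \sum_(l < p) (if P l then F l else 0) = F a.
Proof.
move=> HP; rewrite -big_mkcond (big_pred1 a) //.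
Qed.

Lemma sum_ord_false (p : nat) (F : 'I_p -> R) (P : pred 'I_p) :
  (forall l, P l = false) -> \sum_(l < p) (if P l then F l else 0) = 0.
Proof. by move=> HP; apply: big1 => l _; rewrite HP. Qed.

Lemma posdef_unit (p : nat) (G : 'M[R]_p) : posdef G -> G \in unitmx.
Proof.
move=> hG; rewrite -row_free_unit -kermx_eq0; apply: contraT => nz.
case: (pickP (fun i => row i (kermx G) != 0)) => [i Hi|H0]; last first.
  case/negP: nz; apply/eqP/row_matrixP => i.
  by move: (H0 i) => /= /negbT; rewrite negbK => /eqP ->; rewrite row0.
have := hG (row i (kermx G))^T.
rewrite trmx_eq0.
rewrite Hi => /(_ isT).
rewrite /bform trmxK -row_mul mulmx_ker row0.
by rewrite mul0mx mxE ltxx.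
Qed.

Lemma sum_nat_eq (a b i : nat) (F : nat -> R) : (a <= i < b)%N ->
  \sum_(a <= l < b) (if l == i then F l else 0) = F i.
Proof.
case/andP=> hai hib.
rewrite (big_cat_nat hai (ltnW hib)) /= [X in _ + X]big_ltn // eqxx.
rewrite big_nat_cond big1 ?add0r; last first.
  by move=> l /andP[/andP[_ hl] _]; rewrite ifF //; apply/negbTE; rewrite neq_ltn hl.
rewrite big_nat_cond big1 ?addr0 // => l /andP[/andP[hl _] _]; rewrite ifF //.
by apply/negbTE; rewrite neq_ltn hl orbT.
Qed.

Section Bform.
Variables (p : nat) (G : 'M[R]_p).
Implicit Types x y z : 'cV[R]_p.

Lemma bformDr x y z : bform G x (y + z) = bform G x y + bform G x z.
Proof. by rewrite /bform mulmxDr mxE. Qed.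
Lemma bformBr x y z : bform G x (y - z) = bform G x y - bform G x z.
Proof. by rewrite /bform mulmxBr !mxE. Qed.
Lemma bformZr a x y : bform G x (a *: y) = a * bform G x y.
Proof. by rewrite /bform -scalemxAr mxE. Qed.
Lemma bformZl a x y : bform G (a *: x) y = a * bform G x y.
Proof. by rewrite /bform linearZ /= -!scalemxAl mxE. Qed.
Lemma bformNl x y : bform G (- x) y = - bform G x y.
Proof. by rewrite -scaleN1r bformZl mulN1r. Qed.
Lemma bformNr x y : bform G x (- y) = - bform G x y.
Proof. by rewrite -scaleN1r bformZr mulN1r. Qed.
Lemma bform_sumr (I : Type) (rr : seq I) (P : pred I) (F : I -> 'cV[R]_p) x :
  bform G x (\sum_(i <- rr | P i) F i) = \sum_(i <- rr | P i) bform G x (F i).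
Proof. by rewrite /bform mulmx_sumr summxE. Qed.
End Bform.

Lemma scal_tr (a b : nat) (X : 'M[R]_(1, 1)) : X ord0 ord0 = X^T ord0 ord0.
Proof. by rewrite mxE. Qed.

Lemma bform_trE (p : nat) (G : 'M[R]_p) x y :
  (x^T *m G^T *m y) ord0 ord0 = bform G y x.
Proof. by rewrite (scal_tr 0 0) !trmx_mul !trmxK mulmxA. Qed.

Lemma bform_sym (p : nat) (G : 'M[R]_p) x y : G^T = G -> bform G x y = bform G y x.
Proof. by move=> hG; rewrite -bform_trE hG. Qed.

Lemma posdef_ge0 (p : nat) (G : 'M[R]_p) x : posdef G -> 0 <= bform G x x.
Proof.
move=> hG; case: (eqVneq x 0) => [->|nz]; last exact/ltW/hG.
by rewrite /bform mulmx0 mxE.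
Qed.


Lemma mulBE (a k : nat) (X : 'M[R]_(a,k)) (alpha beta : nat -> R) i j :
  (X *m Bmat k alpha beta) i j = alpha j.+1 * X i j +
    \sum_(l < k) (if l.+1 == j :> nat then beta j.+1 * X i l else 0).
Proof.
rewrite mxE -(@sum_ord_eq _ (fun l => alpha j.+1 * X i l) j (fun l => l == j)) //.
rewrite -big_split /=; apply: eq_bigr => l _; rewrite mxE.
case: (eqVneq l j) => [->|nlj].
  rewrite eqxx ifF; first by rewrite addr0 mulrC.
  by apply/negbTE; rewrite eqn_leq ltnn.
rewrite add0r ifF; last by apply/negbTE; rewrite eq_sym.
rewrite eq_sym; case: (l.+1 == j :> nat); first by rewrite mulrC.
by rewrite mulr0.
Qed.

Lemma mulBtE (a k : nat) (X : 'M[R]_(k,a)) (alpha beta : nat -> R) i j :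
  ((Bmat k alpha beta)^T *m X) i j = alpha i.+1 * X i j +
    \sum_(l < k) (if l.+1 == i :> nat then beta i.+1 * X l j else 0).
Proof.
have -> : (Bmat k alpha beta)^T *m X = (X^T *m Bmat k alpha beta)^T.
  by rewrite trmx_mul trmxK.
rewrite mxE mulBE mxE.
by congr (_ + _); apply: eq_bigr => l _; rewrite !mxE.
Qed.

End Helpers.

Section Helpers2.
Set Implicit Arguments. Unset Strict Implicit.
Lemma sum_ord_eqV (V : zmodType) (p : nat) (F : 'I_p -> V) (a : 'I_p) (P : pred 'I_p) :
  (forall l, P l = (l == a)) -> \sum_(l < p) (if P l then F l else 0) = F a.
Proof.
move=> HP; rewrite -big_mkcond (big_pred1 a) //.
Qed.
End Helpers2.

Theorem mainTheorem8 (R : rcfType) (m n : nat)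
  (M : 'M[R]_m) (A : 'M[R]_(m, n)) (C : 'M[R]_n) (b : 'cV[R]_n) (N : 'M[R]_n)
  (* setting *)
  (hnm : (n <= m)%N)
  (hM : posdef M)
  (hA : \rank A = n)
  (hCsym : C^T = C) (hC : possemidef C)
  (hb : b != 0)
  (hNsym : N^T = N) (hN : posdef N)
  (* nsCRAIG quantities (indexed from 1) *)
  (q r ghat g : nat -> 'cV[R]_n) (w v : nat -> 'cV[R]_m) (s t : nat -> 'cV[R]_n)
  (alpha beta chi : nat -> R) (h : nat -> nat -> R)
  (k : nat) (hk : (1 <= k)%N)
  (* initialization *)
  (i_beta : beta 1%N = Gnorm (invmx N) b)
  (i_q : q 1%N = (beta 1%N)^-1 *: (invmx N *m b))
  (i_r : r 1%N = q 1%N)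
  (i_w : w 1%N = invmx M *m A *m q 1%N)
  (i_s : s 1%N = C *m r 1%N)
  (i_alpha : alpha 1%N = Num.sqrt (bform M (w 1%N) (w 1%N) + ((r 1%N)^T *m s 1%N) ord0 ord0))
  (i_v : v 1%N = (alpha 1%N)^-1 *: w 1%N)
  (i_t : t 1%N = (alpha 1%N)^-1 *: s 1%N)
  (i_chi : chi 1%N = beta 1%N / alpha 1%N)
  (* body of step j, for 1 <= j <= k *)
  (s_ghat : forall j, (1 <= j <= k)%N -> ghat j = invmx N *m (A^T *m v j + t j))
  (s_h : forall j i, (1 <= j <= k)%N -> (1 <= i <= j)%N ->
           h j i = bform N (q i) (ghat j))
  (s_g : forall j, (1 <= j <= k)%N ->
           g j = ghat j - \sum_(1 <= i < j.+1) h j i *: q i)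
  (s_beta : forall j, (1 <= j <= k)%N -> beta j.+1 = Gnorm N (g j))
  (* the recurrence did not stop before step k *)
  (s_nostop : forall j, (1 <= j < k)%N -> beta j.+1 != 0)
  (s_q : forall j, (1 <= j < k)%N -> q j.+1 = (beta j.+1)^-1 *: g j)
  (s_w : forall j, (1 <= j < k)%N -> w j.+1 = invmx M *m A *m q j.+1 - beta j.+1 *: v j)
  (s_r : forall j, (1 <= j < k)%N -> r j.+1 = q j.+1 - (beta j.+1 / alpha j) *: r j)
  (s_s : forall j, (1 <= j < k)%N -> s j.+1 = C *m r j.+1)
  (s_alpha : forall j, (1 <= j < k)%N ->
     alpha j.+1 = Num.sqrt (bform M (w j.+1) (w j.+1) + ((r j.+1)^T *m s j.+1) ord0 ord0))
  (s_v : forall j, (1 <= j < k)%N -> v j.+1 = (alpha j.+1)^-1 *: w j.+1)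
  (s_t : forall j, (1 <= j < k)%N -> t j.+1 = (alpha j.+1)^-1 *: s j.+1)
  (s_chi : forall j, (1 <= j < k)%N -> chi j.+1 = - (beta j.+1 / alpha j.+1) * chi j)
  (* the divisions by alpha_1, ..., alpha_k are defined *)
  (s_alpha0 : forall j, (1 <= j <= k)%N -> alpha j != 0) :
  let y := - (invmx (Bmat k alpha beta) *m invmx (Hmat k h beta) *m (beta 1%N *: e1 R k)) in
  let p := Qmat k q *m y in
  let u := - (invmx M *m A *m p) in
  let res := b - A^T *m u + C *m p in
  M *m u + A *m p = 0 /\
  res = - (chi k *: (N *m g k)) /\
  (0 < beta k.+1 -> res = - ((chi k * beta k.+1) *: (N *m ((beta k.+1)^-1 *: g k)))) /\
  (forall i, (1 <= i <= k)%N -> ((q i)^T *m res) ord0 ord0 = 0) /\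
  Gnorm (invmx N) res = beta k.+1 * `|chi k| /\
  Gnorm (invmx N) res / Gnorm (invmx N) b = beta k.+1 * `|chi k| / beta 1%N.
Proof.
move=> y p u res.
have uM : M \in unitmx := posdef_unit hM.
have uN : N \in unitmx := posdef_unit hN.
have iNsym : (invmx N)^T = invmx N by rewrite trmx_inv hNsym.
have jcase : forall j, (1 <= j <= k)%N -> j = 1%N \/ exists2 j', j = j'.+1 & (1 <= j' < k)%N.
  case=> [//|[|j]] /andP[_ hj]; [by left | right; exists j.+1 => //; lia].
have sC : forall j, (1 <= j <= k)%N -> s j = C *m r j.
  by move=> j /jcase [->|[j' -> hj']]; [exact: i_s | exact: s_s].
have vW : forall j, (1 <= j <= k)%N -> alpha j *: v j = w j.
  move=> j hj; move: (s_alpha0 _ hj); case/jcase: hj => [->|[j' -> hj']] a0;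
    [rewrite i_v | rewrite s_v //]; by rewrite scalerA mulfV ?scale1r.
have tS : forall j, (1 <= j <= k)%N -> alpha j *: t j = s j.
  move=> j hj; move: (s_alpha0 _ hj); case/jcase: hj => [->|[j' -> hj']] a0;
    [rewrite i_t | rewrite s_t //]; by rewrite scalerA mulfV ?scale1r.
have aSq : forall j, (1 <= j <= k)%N ->
    alpha j ^+ 2 = bform M (w j) (w j) + bform C (r j) (r j).
  move=> j hj.
  have e : alpha j = Num.sqrt (bform M (w j) (w j) + bform C (r j) (r j)).
    rewrite [bform C _ _]/bform -mulmxA -sC //.
    by case/jcase: hj => [->|[j' -> hj']]; [exact: i_alpha | exact: s_alpha].
  by rewrite e sqr_sqrtr //; apply: addr_ge0; [exact: posdef_ge0 | exact: hC].
have bN : bform (invmx N) b b = bform N (invmx N *m b) (invmx N *m b).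
  by rewrite /bform trmx_mul iNsym (mulmxKV uN) mulmxA.
have b1pos : 0 < beta 1%N.
  rewrite i_beta sqrtr_gt0 bN; apply: hN.
  apply: contraNneq hb => x0; by rewrite -(mulKVmx uN b) x0 mulmx0.
have b1nz : beta 1%N != 0 by rewrite gt_eqF.
pose ON j := forall i l, (1 <= i <= j)%N -> (1 <= l <= j)%N ->
   bform N (q i) (q l) = (i == l)%:R.
have og : forall j, (1 <= j <= k)%N -> ON j ->
    forall i, (1 <= i <= j)%N -> bform N (q i) (g j) = 0.
  move=> j hj hON i hi.
  rewrite (s_g _ hj) bformBr bform_sumr.
  rewrite (eq_big_nat _ _ (F2 := fun l => if l == i then h j i else 0)); last first.
    move=> l hl; rewrite bformZr (hON i l hi); last by lia.
    by rewrite eq_sym; case: eqP => [->|_]; rewrite ?mulr1 ?mulr0.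
  by rewrite sum_nat_eq ?(s_h _ _ hj hi) ?subrr //; lia.
have ONk : forall j, (1 <= j <= k)%N -> ON j.
  elim=> [//|j IH] hj.
  case: j IH hj => [|j] IH hj i l hi hl.
    have -> : i = 1%N by lia.
    have -> : l = 1%N by lia.
    rewrite i_q bformZl bformZr -bN.
    have -> : bform (invmx N) b b = beta 1%N ^+ 2.
      by rewrite i_beta sqr_sqrtr // bN posdef_ge0.
    by rewrite eqxx /= mulr1n; field; exact: b1nz.
  have ONj : ON j.+1 by apply: IH; lia.
  have hjk : (1 <= j.+1 < k)%N by lia.
  have qE := s_q _ hjk.
  have bnz := s_nostop _ hjk.
  have gg : bform N (g j.+1) (g j.+1) = beta j.+2 ^+ 2.
    by rewrite (s_beta j.+1) ?sqr_sqrtr ?posdef_ge0 //; lia.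
  have ogj := og j.+1 ltac:(lia) ONj.
  have [ei|ni] := eqVneq i j.+2; have [el|nl] := eqVneq l j.+2.
  - by rewrite ei el qE bformZl bformZr gg eqxx /= mulr1n; field; exact: bnz.
  - rewrite ei qE bformZl bform_sym // ogj ?mulr0; last by lia.
    by rewrite eq_sym (negbTE nl).
  - rewrite el qE bformZr ogj ?mulr0; last by lia.
    by rewrite (negbTE ni).
  - by apply: ONj; lia.
pose V := colmx k v. pose T := colmx k t. pose Q := Qmat k q.
pose P := colmx k (fun j => (alpha j)^-1 *: r j).
pose B := Bmat k alpha beta. pose H := Hmat k h beta.
have QE : Q = colmx k q by [].
have hjk : forall j : 'I_k, (1 <= j.+1 <= k)%N.
  by move=> j; apply/andP; split; [|exact: ltn_ord].
have vE : forall j, (1 <= j <= k)%N -> v j = (alpha j)^-1 *: w j.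
  by move=> j hj; rewrite -(vW j hj) scalerA mulVf ?scale1r // s_alpha0.
have tE : forall j, (1 <= j <= k)%N -> t j = (alpha j)^-1 *: s j.
  by move=> j hj; rewrite -(tS j hj) scalerA mulVf ?scale1r // s_alpha0.
have F2 : invmx M *m A *m Q = V *m B.
  apply/matrixP => i j; rewrite QE colmxE mulBE [V i j]mxE.
  case: j => [[|j] hj] /=.
    rewrite big1_eq addr0 -i_w -(vW 1%N) ?mxE //; lia.
  rewrite (@sum_ord_eq _ _ (fun l => beta j.+2 * V i l) (Ordinal (ltnW hj))); last first.
    by move=> l; rewrite ?eqSS.
  have e := s_w j.+1 ltac:(lia).
  have e2 : invmx M *m A *m q j.+2 = w j.+2 + beta j.+2 *: v j.+1 by rewrite e subrK.
  by rewrite e2 -(vW j.+2) ?mxE //; lia.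
have F3 : C *m Q = T *m B.
  apply/matrixP => i j; rewrite QE colmxE mulBE [T i j]mxE.
  case: j => [[|j] hj] /=.
    rewrite big1_eq addr0 -i_r -i_s -(tS 1%N) ?mxE //; lia.
  rewrite (@sum_ord_eq _ _ (fun l => beta j.+2 * T i l) (Ordinal (ltnW hj))); last first.
    by move=> l; rewrite ?eqSS.
  have e := s_r j.+1 ltac:(lia).
  have e2 : q j.+2 = r j.+2 + (beta j.+2 / alpha j.+1) *: r j.+1 by rewrite e subrK.
  rewrite e2 mulmxDr -scalemxAr -!sC; try lia.
  rewrite -(tS j.+2) -?(tS j.+1) ?scalerA ?divfK ?mxE //; try lia.
  by apply: s_alpha0; lia.
have F5 : T = C *m P.
  apply/matrixP => i j; rewrite colmxE [LHS]mxE /=.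
  by rewrite tE // -scalemxAr -sC.
pose ek : 'cV[R]_k := \col_(j < k) (if j.+1 == k then 1 else 0).
pose G := g k *m ek^T.
pose W := A^T *m V + T.
have colH : forall j : 'I_k, ghat j.+1 =
    \sum_(l < k) H l j *: q l.+1 + (if j.+1 == k then g k else 0).
  move=> j; have hj := hjk j.
  have gE : ghat j.+1 = g j.+1 + \sum_(1 <= i < j.+2) h j.+1 i *: q i.
    by rewrite (s_g _ hj) subrK.
  have -> : \sum_(l < k) H l j *: q l.+1 =
      \sum_(l < k) (if (l < j.+1)%N then h j.+1 l.+1 *: q l.+1 else 0) +
      \sum_(l < k) (if (l == j.+1 :> nat) then beta j.+2 *: q l.+1 else 0).
    rewrite -big_split; apply: eq_bigr => l _; rewrite /H mxE ltnS.
    case: leqP => hl /=.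
      by rewrite ifF ?addr0 //; apply/negbTE/eqP => e; lia.
    by rewrite add0r; case: eqP => _; rewrite ?scale0r.
  rewrite -big_mkcond /= -(big_ord_widen k (fun l => h j.+1 l.+1 *: q l.+1)) //.
  rewrite gE big_add1 /= big_mkord -addrA addrC; congr (_ + _).
  have [jk|jk] := ltnP j.+1 k.
    rewrite (@sum_ord_eqV _ _ (fun l => beta j.+2 *: q l.+1) (Ordinal jk)) //.
    rewrite ifF; last by apply/negbTE/eqP => e; lia.
    rewrite addr0 (s_q j.+1 ltac:(lia)) scalerA mulfV ?scale1r //.
    by apply: s_nostop; lia.
  rewrite big1; last first.
    by move=> l _; have := ltn_ord l; case: eqP => // e; lia.
  rewrite ifT ?add0r; last by apply/eqP; lia.
  have e : (j.+1 = k)%N by lia.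
  by rewrite e.
have F4 : W = N *m (Q *m H + G).
  apply/matrixP => i j.
  have XE : forall l, (Q *m H + G) l j = ghat j.+1 l ord0.
    move=> l; rewrite colH !mxE summxE big_ord1 !mxE; congr (_ + _).
      by apply: eq_bigr => c _; rewrite !mxE mulrC.
    by case: (j.+1 == k :> nat); rewrite ?mulr1 ?mulr0 ?mxE.
  have -> : (N *m (Q *m H + G)) i j = (N *m ghat j.+1) i ord0.
    by rewrite [LHS]mxE [RHS]mxE; apply: eq_bigr => l _; rewrite XE.
  rewrite (s_ghat _ (hjk j)) mulKVmx // /W [LHS]mxE !colmxE [T i j]mxE.
  by rewrite [RHS]mxE.
have ONK := ONk k ltac:(lia).
have QtNQ : Q^T *m N *m Q = 1%:M.
  apply/matrixP => i j; rewrite QE colmxE -mulmxA colmx_trE mulmxA.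
  rewrite -[(_ *m _ *m _) _ _]/(bform N (q i.+1) (q j.+1)) ONK ?hjk // !mxE.
  by rewrite eqSS.
have QtNg : Q^T *m N *m g k = 0.
  apply/matrixP => i c; rewrite (ord1 c) QE -mulmxA colmx_trE mulmxA.
  rewrite -[(_ *m _ *m _) _ _]/(bform N (q i.+1) (g k)) og ?hjk // ?mxE //.
  by lia.
have HE : H = Q^T *m W.
  by rewrite F4 mulmxA mulmxDr mulmxA QtNQ mul1mx /G mulmxA QtNg mul0mx addr0.
have AQ : A *m Q = M *m (V *m B) by rewrite -F2 -!mulmxA mulKVmx.
have QtC : Q^T *m C = B^T *m T^T by rewrite -{1}hCsym -trmx_mul F3 trmx_mul.
have QtT : Q^T *m T = B^T *m T^T *m P by rewrite {1}F5 mulmxA QtC.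
have QtAt : Q^T *m A^T = B^T *m V^T *m M^T by rewrite -trmx_mul AQ !trmx_mul.
pose K := V^T *m M^T *m V + T^T *m P.
have HBK : H = B^T *m K.
  by rewrite HE /W mulmxDr mulmxA QtAt QtT /K mulmxDr !mulmxA.
have Kdiag : forall j : 'I_k, K j j = 1.
  move=> j; have hj := hjk j; have a0 := s_alpha0 _ hj.
  rewrite /K [LHS]mxE colmxE -mulmxA colmx_trE mulmxA bform_trE colmxE colmx_trE.
  rewrite vE // bformZl bformZr tE // linearZ /= linearZ /= -scalemxAl scalerA mxE.
  rewrite sC // trmx_mul bform_trE.
  have eX : bform M (w j.+1) (w j.+1) = alpha j.+1 ^+ 2 - bform C (r j.+1) (r j.+1).
    by rewrite aSq // addrK.
  by rewrite eX; field.
have Klow : forall d (i j : 'I_k), (nat_of_ord i = j + d.+1)%N -> K i j = 0.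
  elim=> [|d IH] i j e; have a0 := s_alpha0 _ (hjk i);
    have := congr1 (fun X : 'M[R]_k => X i j) HBK; rewrite /= mulBtE /H mxE.
  - rewrite ifF; last by apply/negbTE; rewrite -ltnNge; lia.
    rewrite ifT; last by apply/eqP; lia.
    rewrite (@sum_ord_eq _ _ (fun l => beta i.+1 * K l j) j); last first.
      move=> l; apply/eqP/eqP => [h1|->]; [apply/val_inj => /=; lia | lia].
    rewrite Kdiag mulr1 (_ : beta i.+1 = beta j.+2); last by congr beta; lia.
    move=> /(congr1 (fun x => x - beta j.+2)); rewrite subrr addrK => /esym /eqP.
    by rewrite mulf_eq0 (negbTE a0) /= => /eqP.
  - rewrite ifF; last by apply/negbTE; rewrite -ltnNge; lia.
    rewrite ifF; last by apply/negbTE/eqP; lia.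
    have ai : (i.-1 < k)%N by apply: leq_ltn_trans (leq_pred i) (ltn_ord i).
    rewrite (@sum_ord_eq _ _ (fun l => beta i.+1 * K l j) (Ordinal ai)); last first.
      move=> l; apply/eqP/eqP => [h1|->]; [apply/val_inj => /=; lia | rewrite /=; lia].
    rewrite (IH (Ordinal ai) j) /=; last by lia.
    rewrite mulr0 addr0 => /esym /eqP.
    by rewrite mulf_eq0 (negbTE a0) /= => /eqP.
have uB : B \in unitmx.
  rewrite unitmxE -det_tr det_trig; last first.
    apply/forallP => i; apply/forallP => j; apply/implyP => hij.
    rewrite !mxE.
    have h1 : (i == j :> nat) = false by apply/negbTE/eqP; lia.
    have h2 : (i == j.+1 :> nat) = false by apply/negbTE/eqP; lia.
    by rewrite h1 h2.
  rewrite unitfE; apply/prodf_neq0 => i _; rewrite !mxE eqxx.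
  exact: s_alpha0 _ (hjk i).
have uK : K \in unitmx.
  rewrite unitmxE -det_tr det_trig; last first.
    apply/forallP => i; apply/forallP => j; apply/implyP => hij.
    by rewrite mxE (Klow (j - i.+1)%N) //; lia.
  rewrite (eq_bigr (fun _ => 1)) ?big1_eq ?unitr1 // => i _.
  by rewrite mxE Kdiag.
have uH : H \in unitmx by rewrite HBK unitmx_mul unitmx_tr uB uK.
have uBt : B^T \in unitmx by rewrite unitmx_tr.
pose X : 'cV[R]_k := \col_(i < k) chi i.+1.
have BtX : B^T *m X = beta 1%N *: e1 R k.
  apply/matrixP => i c; rewrite (ord1 c) mulBtE.
  case: i => [[|i] hi] /=.
    rewrite big1_eq addr0 !mxE /= mulr1 i_chi mulrC divfK //.
    exact: s_alpha0.
  rewrite (@sum_ord_eq _ _ (fun l => beta i.+2 * X l ord0) (Ordinal (ltnW hi))); last first.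
    by move=> l; rewrite ?eqSS.
  have hi' : (1 <= i.+1 < k)%N by clear -hi; lia.
  rewrite !mxE /= (s_chi i.+1 hi') mulr0.
  have a0 : alpha i.+2 != 0 by apply: s_alpha0; clear -hi; lia.
  by field.
pose z := invmx H *m (beta 1%N *: e1 R k).
have Hz : H *m z = beta 1%N *: e1 R k by rewrite /z mulKVmx.
have Kz : K *m z = X.
  have e : B^T *m (K *m z) = B^T *m X by rewrite mulmxA -HBK Hz BtX.
  by rewrite -(mulKmx uBt (K *m z)) e mulKmx.
have km1lt : (k.-1 < k)%N by rewrite ltn_predL.
pose km1 : 'I_k := Ordinal km1lt.
have ekz : ek^T *m z = (chi k)%:M.
  have zk : z km1 ord0 = chi k.
    have := congr1 (fun Y : 'cV[R]_k => Y km1 ord0) Kz; rewrite /= [LHS]mxE.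
    rewrite (eq_bigr (fun l => if l == km1 then z l ord0 else 0)); last first.
      move=> l _; case: eqVneq => [->|nl]; first by rewrite Kdiag mul1r.
      have nl' : (l : nat) <> k.-1 by move=> e'; apply: (negP nl); apply/eqP; apply: val_inj; exact: e'.
      rewrite (Klow (k.-1 - l.+1)%N km1 l) ?mul0r //=.
      by have := ltn_ord l; clear -nl'; lia.
    rewrite (@sum_ord_eq _ _ (fun l => z l ord0) km1 (fun l => l == km1)) //.
    move=> ->; rewrite mxE /=; by rewrite prednK.
  apply/matrixP => a c; rewrite (ord1 a) (ord1 c) [RHS]mxE eqxx mulr1n [LHS]mxE.
  rewrite (eq_bigr (fun l => if l == km1 then z l ord0 else 0)); last first.
    move=> l _; rewrite !mxE; case: (eqVneq l km1) => [->|nl].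
      by rewrite /= prednK // eqxx mul1r.
    have nl' : (l : nat) <> k.-1 by move=> e'; apply: (negP nl); apply/eqP; apply: val_inj; exact: e'.
    by rewrite ifF ?mul0r //; apply/negbTE/eqP; have := ltn_ord l; clear -nl' hk; lia.
  by rewrite (@sum_ord_eq _ _ (fun l => z l ord0) km1 (fun l => l == km1)).
have Qe1 : Q *m (beta 1%N *: e1 R k) = beta 1%N *: q 1%N.
  pose o0 : 'I_k := Ordinal hk.
  apply/matrixP => i c; rewrite (ord1 c) -scalemxAr [LHS]mxE [RHS]mxE; congr (_ * _).
  rewrite [LHS]mxE (eq_bigr (fun l => if l == o0 then q 1%N i ord0 else 0)); last first.
    move=> l _; rewrite !mxE; case: (eqVneq l o0) => [->|nl]; first by rewrite /= mulr1.
    have nl' : (l : nat) <> 0%N by move=> e'; apply: (negP nl); apply/eqP; apply: val_inj; exact: e'.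
    by rewrite ifF ?mulr0 //; apply/negbTE/eqP.
  by rewrite (@sum_ord_eq _ _ (fun l => q 1%N i ord0) o0 (fun l => l == o0)).
have Byz : B *m y = - z by rewrite /y mulmxN -mulmxA mulKVmx.
have resE : res = b - W *m z.
  rewrite /res /u /p mulmxN opprK.
  have e1' : invmx M *m A *m (Q *m y) = V *m (B *m y) by rewrite !mulmxA F2.
  rewrite e1' -/Q [C *m (Q *m y)]mulmxA F3 -[T *m B *m y]mulmxA Byz /W mulmxDl.
  by rewrite !mulmxN mulmxA opprD addrA.
have Wz : W *m z = b + chi k *: (N *m g k).
  rewrite F4 -mulmxA mulmxDl -mulmxA Hz Qe1 /G -mulmxA ekz mul_mx_scalar mulmxDr.
  rewrite -!scalemxAr i_q -scalemxAr mulKVmx // scalerA mulfV ?scale1r //.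
have resF : res = - (chi k *: (N *m g k)) by rewrite resE Wz opprD addrA subrr add0r.
have GN : Gnorm (invmx N) res = beta k.+1 * `|chi k|.
  rewrite resF /Gnorm bformNl bformNr opprK bformZl bformZr.
  have -> : bform (invmx N) (N *m g k) (N *m g k) = bform N (g k) (g k).
    by rewrite /bform trmx_mul hNsym -mulmxA mulKmx.
  have hkk : (1 <= k <= k)%N by rewrite hk leqnn.
  rewrite mulrA -expr2 sqrtrM ?sqr_ge0 // sqrtr_sqr.
  by rewrite mulrC (s_beta k hkk) /Gnorm.
split.
  by rewrite /u mulmxN -mulmxA mulKVmx // addNr.
split; first exact: resF.
split.
  move=> bpos; rewrite resF -scalemxAr scalerA mulfK //.
  by rewrite gt_eqF.
split.
  move=> i hi; rewrite resF mulmxN -scalemxAr mulmxA.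
  have hkk : (1 <= k <= k)%N by rewrite hk leqnn.
  have e0 : (q i)^T *m N *m g k = 0.
    apply/matrixP => a c; rewrite (ord1 a) (ord1 c).
    by rewrite -[(_ *m _ *m _) _ _]/(bform N (q i) (g k)) (og k hkk ONK i hi) mxE.
  by rewrite e0 scaler0 oppr0 mxE.
split; first exact: GN.
by rewrite GN -i_beta.
Qed.
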